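(* Let $N\ge 1$ and let $\mathcal{A}_N=\left\{\sigma_z^{(1)},\dots,\sigma_z^{(N)},\ \sum_{k=1}^{N}\sigma_x^{(k)},\ \sum_{1\le i<j\le N}\sigma_y^{(i)}\sigma_y^{(j)}\right\}$ (for $N=1$ the last sum is empty and is omitted). Then the smallest real vector space of $2^N\times 2^N$ matrices that contains $\mathcal{A}_N$ and is closed under the bracket $(X,Y)\mapsto i[X,Y]=i(XY-YX)$ is the space of all traceless Hermitian $2^N\times 2^N$ matrices, i.e. $\mathcal{A}_N$ generates $\mathfrak{su}(2^N)$ (in its Hermitian realization) by real linear combinations and iterated commutators. *)

(* Defs.v *)
From HB Require Import structures.
From mathcomp Require Import all_boot all_order all_algebra.
From mathcomp Require Import complex.
Set Implicit Arguments. Unset Strict Implicit. Unset Printing Implicit Defensive.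
Import Order.TTheory GRing.Theory Num.Theory.
Local Open Scope ring_scope.

Section Pauli.
Variable R : rcfType.
Local Notation C := R[i].
Variable N : nat.
Local Notation M := 'M[C]_(2 ^ N).

(* The computational basis of (C^2)^{\otimes N} is indexed by 'I_(2^N);
   bit k of the index i (k < N) is the state of qubit k (qubits are
   numbered 0..N-1 here, i.e. qubit k+1 of the paper). *)
Definition qbit (k : nat) (i : nat) : bool := odd (i %/ 2 ^ k).

Definition agree_off (k : nat) (i j : nat) : bool :=
  [forall l : 'I_N, (val l != k) ==> (qbit l i == qbit l j)].

(* sigma_z acting on qubit k: I (x) .. (x) diag(1,-1) (x) .. (x) I *)
Definition sigma_z (k : 'I_N) : M :=
  \matrix_(i, j) (if i == j then (if qbit k i then -1 else 1) else 0).

(* sigma_x = [[0,1],[1,0]] acting on qubit k *)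
Definition sigma_x (k : 'I_N) : M :=
  \matrix_(i, j) (if agree_off k i j && (qbit k i != qbit k j) then 1 else 0).

(* sigma_y = [[0,-i],[i,0]] acting on qubit k:
   <0|sigma_y|1> = -i, <1|sigma_y|0> = i *)
Definition sigma_y (k : 'I_N) : M :=
  \matrix_(i, j) (if agree_off k i j && (qbit k i != qbit k j)
                  then (if qbit k i then ('i)%C else - ('i)%C) else 0).

Definition gen_set (A : M) : Prop :=
  (exists k : 'I_N, A = sigma_z k)
  \/ A = \sum_(k < N) sigma_x k
  \/ A = \sum_(i < N) \sum_(j < N | (i < j)%N) (sigma_y i *m sigma_y j).

Definition ibracket (X Y : M) : M := ('i)%C *: (X *m Y - Y *m X).

Inductive lie_closure (S : M -> Prop) : M -> Prop :=
  | lc_gen A : S A -> lie_closure S A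
  | lc_zero : lie_closure S 0
  | lc_add A B : lie_closure S A -> lie_closure S B -> lie_closure S (A + B)
  | lc_scale (r : R) A : lie_closure S A -> lie_closure S ((r%:C)%C *: A)
  | lc_bracket A B : lie_closure S A -> lie_closure S B ->
                     lie_closure S (ibracket A B).

Definition is_hermitian (A : M) : Prop := forall i j, A j i = ((A i j)^*)%C.

Definition traceless (A : M) : Prop := \tr A = 0.

End Pauli.

(* Main.v *)
Require Import Defs.
From HB Require Import structures.
From mathcomp Require Import all_boot all_order all_algebra.
From mathcomp Require Import complex.
Set Implicit Arguments. Unset Strict Implicit. Unset Printing Implicit Defensive.
Import Order.TTheory GRing.Theory Num.Theory.
From mathcomp Require Import zify ring lra.
Lemma qbit0 y : qbit 0 y = odd y.
Proof. by rewrite /qbit expn0 divn1. Qed.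

Lemma qbitS l y : qbit l.+1 y = qbit l y./2.
Proof. by rewrite /qbit expnS divnMA divn2. Qed.

Lemma qbit_add k y : ~~ qbit k y -> forall l, qbit l (y + 2 ^ k) = qbit l y (+) (l == k).
Proof.
elim: k y => [|k IH] y hy l.
  rewrite qbit0 in hy; case: l => [|l]; first by rewrite !qbit0 expn0 addn1 /= (negbTE hy).
  rewrite !qbitS expn0 addn1 /= addbF; congr qbit.
  by rewrite uphalf_half (negbTE hy).
rewrite qbitS in hy.
have h2 : (y + 2 ^ k.+1)./2 = y./2 + 2 ^ k.
  by rewrite halfD expnS oddM /= andbF add0n mul2n doubleK.
case: l => [|l].
  by rewrite !qbit0 oddD expnS oddM /= addbF.
by rewrite !qbitS h2 IH.
Qed.

Lemma qbit_shift n j z : qbit (n + j) z = qbit j (z %/ 2 ^ n).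
Proof. by rewrite /qbit expnD divnMA. Qed.

Lemma qbit_zero w0 : (forall j, qbit j w0 = false) -> w0 = 0.
Proof.
move=> H0; suff: forall n w, w <= n -> (forall j, qbit j w = false) -> w = 0 :> nat.
  by move/(_ w0 w0 (leqnn w0) H0).
elim=> [|n IH] w hw H; first by move: hw; rewrite leqn0 => /eqP.
have ho : odd w = false by rewrite -qbit0 H.
have hd := odd_double_half w; rewrite ho add0n -addnn in hd.
have e : w./2 = 0.
  apply: IH; first lia.
  by move=> j; rewrite -qbitS.
lia.
Qed.

Lemma qbit_ext n x y : x < 2 ^ n -> y < 2 ^ n ->
  (forall l, l < n -> qbit l x = qbit l y) -> x = y.
Proof.
elim: n x y => [|n IH] x y hx hy H.
  by move: hx hy; rewrite expn0 !ltnS !leqn0 => /eqP -> /eqP ->.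
have hdx := odd_double_half x; have hdy := odd_double_half y.
rewrite -addnn in hdx; rewrite -addnn in hdy.
have ho : odd x = odd y by rewrite -!qbit0 H.
have e : x./2 = y./2.
  apply: IH.
  - move: hx; rewrite expnS. lia.
  - move: hy; rewrite expnS. lia.
  by move=> l hl; rewrite -!qbitS H.
lia.
Qed.

Lemma qbit_addk k y : qbit k (y + 2 ^ k) = ~~ qbit k y.
Proof.
by rewrite /qbit divnDr // divnn expn_gt0 /= oddD addbT.
Qed.

Definition flv (k : nat) (x : nat) : nat := if qbit k x then x - 2 ^ k else x + 2 ^ k.

Lemma flvP k x l : qbit l (flv k x) = qbit l x (+) (l == k).
Proof.
rewrite /flv; case hk: (qbit k x); last by rewrite qbit_add ?hk.
have le : 2 ^ k <= x.
  rewrite leqNgt; apply/negP => lt; move: hk; by rewrite /qbit divn_small.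
set y := x - 2 ^ k.
have ex : x = y + 2 ^ k by rewrite subnK.
have hy : ~~ qbit k y by rewrite -qbit_addk -ex hk.
rewrite [in qbit l x]ex qbit_add //.
by case: (l == k); rewrite ?addbT ?addbF ?negbK.
Qed.

Lemma flv_lt N k x : k < N -> x < 2 ^ N -> flv k x < 2 ^ N.
Proof.
move=> hk hx; rewrite /flv; case hb: (qbit k x).
  by apply: leq_ltn_trans (leq_subr _ _) hx.
have e : (x + 2 ^ k) %/ 2 ^ N = 0.
  apply: qbit_zero => j.
  rewrite -qbit_shift qbit_add ?hb //.
  have -> : (N + j == k) = false by apply/negbTE; rewrite neq_ltn; apply/orP; right; apply: leq_trans hk (leq_addr _ _).
  by rewrite addbF qbit_shift divn_small // /qbit div0n.
rewrite ltnNge; apply/negP => h.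
have : 0 < (x + 2 ^ k) %/ 2 ^ N by rewrite divn_gt0 ?expn_gt0.
by rewrite e.
Qed.

Local Open Scope ring_scope.

Section Main.
Variable R : rcfType.
Variable N : nat.
Local Notation C := R[i].
Local Notation M := 'M[C]_(2 ^ N).
Local Notation I := 'I_(2 ^ N).

Definition fl (k : 'I_N) (x : I) : I := Ordinal (flv_lt (ltn_ord k) (ltn_ord x)).

Lemma flP k x (l : nat) : qbit l (fl k x) = qbit l x (+) (l == k)%N.
Proof. exact: flvP. Qed.

Lemma ord_bits (x y : I) : (forall l : 'I_N, qbit l x = qbit l y) -> x = y.
Proof.
move=> H; apply: val_inj; apply: (@qbit_ext N); rewrite ?ltn_ord // => l hl.
exact: (H (Ordinal hl)).
Qed.

Lemma flK k x : fl k (fl k x) = x.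
Proof. by apply: ord_bits => l; rewrite !flP -addbA addbb addbF. Qed.

Lemma flC k m x : fl k (fl m x) = fl m (fl k x).
Proof. by apply: ord_bits => l; rewrite !flP -!addbA [(_ == k) (+) _]addbC. Qed.

Lemma fl_neq k x : fl k x != x.
Proof.
apply/eqP => e; have := flP k x k; rewrite e eqxx addbT.
by case: (qbit k x).
Qed.

Definition W (p : I -> I) (f : I -> C) : M := \matrix_(x, y) (if y == p x then f x else 0).

Lemma WE p f x y : W p f x y = if y == p x then f x else 0.
Proof. by rewrite mxE. Qed.

Lemma W_ext p q f g : (forall x, p x = q x) -> (forall x, f x = g x) -> W p f = W q g.
Proof. by move=> hp hf; apply/matrixP => x y; rewrite !WE hp hf. Qed.

Lemma W_mul p q f g : W p f *m W q g = W (fun x => q (p x)) (fun x => f x * g (p x)).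
Proof.
apply/matrixP => x y; rewrite !mxE (bigD1 (p x)) //= big1 ?addr0.
  by rewrite !WE eqxx; case: ifP; rewrite ?mulr0.
by move=> k hk; rewrite WE (negbTE hk) mul0r.
Qed.

Lemma W_add p f g : W p f + W p g = W p (fun x => f x + g x).
Proof. by apply/matrixP => x y; rewrite !mxE; case: ifP; rewrite ?addr0. Qed.

Lemma W_scale p c f : c *: W p f = W p (fun x => c * f x).
Proof. by apply/matrixP => x y; rewrite !mxE; case: ifP; rewrite ?mulr0. Qed.

Lemma W0 p : W p (fun _ => 0) = 0.
Proof. by apply/matrixP => x y; rewrite !mxE; case: ifP. Qed.

Lemma W_br p q f g : (forall x, p (q x) = q (p x)) ->
  @ibracket R N (W p f) (W q g) = W (fun x => q (p x)) (fun x => ('i)%C * (f x * g (p x) - g x * f (q x))).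
Proof.
move=> hpq; rewrite /ibracket !W_mul (@W_ext (fun x => p (q x)) (fun x => q (p x)) _ (fun x => g x * f (q x))) //.
rewrite -scaleN1r W_scale W_add W_scale.
by apply: W_ext => // x; rewrite mulN1r.
Qed.

Definition s (k : 'I_N) (x : I) : C := if qbit k x then -1 else 1.

Lemma sz_W k : sigma_z R k = W id (s k).
Proof. by apply/matrixP => x y; rewrite !mxE eq_sym. Qed.

Lemma agree_fl (k : 'I_N) (x y : I) :
  agree_off N k x y && (qbit k x != qbit k y) = (y == fl k x).
Proof.
apply/idP/eqP.
  case/andP => /forallP H hk; apply: ord_bits => l; rewrite flP.
  case: (eqVneq (val l) (val k)) => [e|ne].
    by rewrite e addbT; move: hk; case: (qbit k x); case: (qbit k y).
  by rewrite addbF; move/implyP: (H l) => /(_ ne) /eqP.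
move=> ->; apply/andP; split.
  by apply/forallP => l; apply/implyP => ne; rewrite flP (negbTE ne) addbF.
by rewrite flP eqxx addbT; case: (qbit k x).
Qed.

Lemma sx_W k : sigma_x R k = W (fl k) (fun _ => 1).
Proof. by apply/matrixP => x y; rewrite !mxE agree_fl. Qed.

Lemma sy_W k : sigma_y R k = W (fl k) (fun x => ('i)%C * - s k x).
Proof.
apply/matrixP => x y; rewrite !mxE agree_fl /s; case: ifP => //.
by case: (qbit k x); rewrite ?opprK ?mulr1 ?mulrN1.
Qed.


Local Notation L := (lie_closure (@gen_set R N)).
Local Notation iC := ('i)%C.
Local Notation ibracket := (@ibracket R N).

Lemma ii : iC * iC = -1 :> C.
Proof. by rewrite -expr2 sqr_i. Qed.

Lemma L_scale (r : R) A : L A -> L ((r%:C)%C *: A).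
Proof. exact: lc_scale. Qed.

Lemma L_unscale (r : R) A : r != 0 -> L ((r%:C)%C *: A) -> L A.
Proof.
move=> r0 h; have := lc_scale r^-1 h.
by rewrite scalerA -rmorphM mulVf // rmorph1 scale1r.
Qed.

Lemma L_opp A : L A -> L (- A).
Proof. by move=> h; have := lc_scale (-1) h; rewrite rmorphN1 scaleN1r. Qed.

Lemma L_sum (I0 : finType) (P : pred I0) (F : I0 -> M) :
  (forall i, P i -> L (F i)) -> L (\sum_(i | P i) F i).
Proof.
move=> H; apply: (big_ind L) => //; [exact: lc_zero | exact: lc_add].
Qed.

Lemma ibracketZl c A B : ibracket (c *: A) B = c *: ibracket A B.
Proof. by rewrite /Defs.ibracket -scalemxAl -scalemxAr -scalerBr !scalerA mulrC. Qed.

Lemma ibracketZr c A B : ibracket A (c *: B) = c *: ibracket A B.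
Proof. by rewrite /Defs.ibracket -scalemxAl -scalemxAr -scalerBr !scalerA mulrC. Qed.

Lemma ibracket_sumr (I0 : finType) (P : pred I0) (F : I0 -> M) A :
  ibracket A (\sum_(i | P i) F i) = \sum_(i | P i) ibracket A (F i).
Proof.
by rewrite /Defs.ibracket mulmx_sumr mulmx_suml -sumrB scaler_sumr.
Qed.

Lemma W_brs p q f g : (forall x, p (q x) = q (p x)) ->
  ibracket (W p f) (W q g) = iC *: W (fun x => q (p x)) (fun x => f x * g (p x) - g x * f (q x)).
Proof. by move=> h; rewrite W_br // W_scale. Qed.

Lemma s_fl k m x : s k (fl m x) = (if m == k then -1 else 1) * s k x.
Proof.
rewrite /s flP; case: (eqVneq m k) => [->|ne].
  by rewrite eqxx addbT; case: (qbit k x); rewrite /= ?mulrNN ?mulr1.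
have -> : (val k == val m) = false by apply/negbTE; rewrite val_eqE eq_sym.
by rewrite addbF mul1r.
Qed.

Lemma s2 k x : s k x * s k x = 1.
Proof. by rewrite /s; case: (qbit k x); rewrite ?mulrNN mulr1. Qed.

Lemma s_real k x : s k x = ((if qbit k x then -1 else 1 : R)%:C)%C.
Proof. by rewrite /s; case: (qbit k x); rewrite ?rmorphN1 ?rmorph1. Qed.

Lemma two_real : (2 : C) = ((2 : R)%:C)%C.
Proof. by rewrite rmorphMn. Qed.

Definition Yp k : M := iC *: W (fl k) (s k).
Definition Xk k : M := W (fl k) (fun _ => 1).

Lemma L_Z k : L (W id (s k)).
Proof. by rewrite -sz_W; apply: lc_gen; left; exists k. Qed.

Lemma L_sumX : L (\sum_(k < N) Xk k).
Proof.
apply: lc_gen; right; left; apply: eq_bigr => k _; by rewrite sx_W.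
Qed.

Lemma L_Yp k : L (Yp k).
Proof.
have h := lc_bracket (L_Z k) L_sumX.
rewrite ibracket_sumr (bigD1 k) //= big1 ?addr0 in h.
  rewrite /Xk W_brs // in h.
  apply: (@L_unscale 2); first by rewrite pnatr_eq0.
  rewrite -two_real /Yp scalerA mulrC -scalerA W_scale.
  move: h; congr L; congr (_ *: _); apply: W_ext => // x.
  by rewrite s_fl eqxx; ring.
move=> l ne; rewrite /Xk W_brs //.
rewrite (@W_ext _ (fl l) _ (fun _ => 0)) ?W0 ?scaler0 // => x.
by rewrite s_fl (negbTE ne); ring.
Qed.

Lemma L_X k : L (Xk k).
Proof.
have h := lc_bracket (L_Z k) (L_Yp k).
rewrite /Yp ibracketZr W_brs // scalerA ii in h.
move/L_opp: h; rewrite scaleN1r opprK => h.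
apply: (@L_unscale 2); first by rewrite pnatr_eq0.
rewrite -two_real /Xk W_scale; move: h; congr L.
apply: W_ext => // x.
by rewrite s_fl eqxx /s; case: (qbit k x); ring.
Qed.

Lemma syy i j : sigma_y R i *m sigma_y R j =
  -1 *: W (fun x => fl j (fl i x)) (fun x => s i x * s j (fl i x)).
Proof.
rewrite !sy_W W_mul W_scale; apply: W_ext => // x.
by rewrite mulrACA ii; ring.
Qed.

Lemma L_G : L (\sum_(i < N) \sum_(j < N | (i < j)%N) (sigma_y R i *m sigma_y R j)).
Proof. by apply: lc_gen; right; right. Qed.

Lemma adZ b c p g : ibracket (W id (s b)) (c *: W p g) =
  (c * iC) *: W p (fun x => s b x * g x - g x * s b (p x)).
Proof. by rewrite ibracketZr W_brs // scalerA mulrC. Qed.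

Definition eps (i j a : 'I_N) : C := (if j == a then -1 else 1) * (if i == a then -1 else 1).

Lemma eps_lemma (i j a b : 'I_N) : (i < j)%N -> (a < b)%N -> ~~ ((i == a) && (j == b)) ->
  (1 - eps i j a) * (1 - eps i j b) = 0.
Proof.
rewrite /eps -!val_eqE /= => hij hab.
do 4 (case: eqP => ?); rewrite /=; try lia; move=> _; ring.
Qed.

Lemma term_eq (i j a b : 'I_N) : (i < j)%N -> (a < b)%N ->
  ibracket (W id (s a)) (ibracket (W id (s b)) (sigma_y R i *m sigma_y R j)) =
  if (i == a) && (j == b) then W (fun x => fl b (fl a x)) (fun _ => 4) else 0.
Proof.
move=> hij hab; rewrite syy !adZ.
have nab : (a == b) = false by rewrite -val_eqE; apply: ltn_eqF.
have nba : (b == a) = false by rewrite eq_sym.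
case: ifP => [/andP[/eqP ei /eqP ej] | hne].
  subst i j; rewrite -mulrA ii mulN1r opprK scale1r.
  apply: W_ext => // x; rewrite !s_fl !eqxx nab nba /s.
  by case: (qbit a x); case: (qbit b x); ring.
rewrite (@W_ext _ (fun x => fl j (fl i x)) _ (fun _ => 0)) ?W0 ?scaler0 // => x.
have e := eps_lemma hij hab (negbT hne).
transitivity (s a x * s b x * (s i x * s j (fl i x)) * ((1 - eps i j a) * (1 - eps i j b))).
  by rewrite /eps !s_fl; ring.
by rewrite e mulr0.
Qed.

Lemma sum_pick (Q : M) (a b : 'I_N) : (a < b)%N ->
  \sum_(i < N) \sum_(j < N | (i < j)%N) (if (i == a) && (j == b) then Q else 0) = Q.
Proof.
move=> hab; rewrite (bigD1 a) //= (bigD1 b) //= !eqxx /= big1 ?addr0.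
  rewrite big1 ?addr0 // => i /negbTE ->; rewrite big1 //.
by move=> j /andP[_ /negbTE ->].
Qed.

Definition XX (a b : 'I_N) : M := W (fun x => fl b (fl a x)) (fun _ => 1).

Lemma XX_sym a b : XX a b = XX b a.
Proof. by apply: W_ext => // x; rewrite flC. Qed.

Lemma L_XX (a b : 'I_N) : a != b -> L (XX a b).
Proof.
wlog hab : a b / (a < b)%N.
  move=> H nab; case: (ltngtP a b) => [h|h|h]; first exact: H.
    by rewrite XX_sym; apply: H => //; rewrite eq_sym.
  by move: nab; rewrite (val_inj h) eqxx.
move=> _; have h := lc_bracket (L_Z a) (lc_bracket (L_Z b) L_G).
have E : ibracket (W id (s a)) (ibracket (W id (s b))
   (\sum_(i < N) \sum_(j < N | (i < j)%N) (sigma_y R i *m sigma_y R j))) =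
   W (fun x => fl b (fl a x)) (fun _ => 4).
  rewrite ibracket_sumr.
  under eq_bigr => i _ do rewrite ibracket_sumr.
  rewrite ibracket_sumr.
  under eq_bigr => i _ do rewrite ibracket_sumr.
  under eq_bigr => i _ do under eq_bigr => j hj do rewrite (term_eq hj hab).
  by rewrite sum_pick.
rewrite E in h.
apply: (@L_unscale 4); first by rewrite pnatr_eq0.
rewrite /XX W_scale; move: h; congr L; apply: W_ext => // x.
by rewrite rmorphMn mulr1.
Qed.

Lemma L_XZ (m k : 'I_N) : m != k -> L (W (fl m) (s k)).
Proof.
move=> nmk; have nkm : k != m by rewrite eq_sym.
have h := lc_bracket (L_Yp k) (L_XX nkm).
rewrite /Yp /XX ibracketZl W_brs ?scalerA ?ii in h; last by move=> x; rewrite flC.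
move/L_opp: h; rewrite scaleN1r opprK => h.
apply: (@L_unscale 2); first by rewrite pnatr_eq0.
rewrite -two_real W_scale; move: h; congr L; apply: W_ext => x; first by rewrite flK.
rewrite !s_fl eqxx (negbTE nmk) /s; case: (qbit k x); ring.
Qed.

Definition ZZ (k m : 'I_N) : M := W id (fun x => s k x * s m x).

Lemma L_ZZ (k m : 'I_N) : m != k -> L (ZZ k m).
Proof.
move=> nmk; have h := lc_bracket (L_XZ nmk) (L_Yp m).
rewrite /Yp ibracketZr W_brs ?scalerA ?ii // in h.
apply: (@L_unscale 2); first by rewrite pnatr_eq0.
rewrite -two_real /ZZ !W_scale; move: h; rewrite W_scale; congr L; apply: W_ext => x; first by rewrite flK.
rewrite !s_fl eqxx ?(negbTE nmk) ?(negbTE nkm) /s; case: (qbit k x); case: (qbit m x); ring.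
Qed.

Definition Lk (k : 'I_N) (f : I -> C) :=
  L (W (fl k) f) /\ L (iC *: W (fl k) (fun x => s k x * f x)).

Lemma Lk_lin k f g (a b : R) : Lk k f -> Lk k g ->
  Lk k (fun x => (a%:C)%C * f x + (b%:C)%C * g x).
Proof.
move=> [h1 h2] [h3 h4]; split.
  have := lc_add (L_scale a h1) (L_scale b h3).
  by rewrite !W_scale W_add.
have := lc_add (L_scale a h2) (L_scale b h4).
rewrite !W_scale W_add => h.
by move: h; congr L; apply: W_ext => // x; ring.
Qed.

Lemma Lk_mul k m f : m != k -> Lk k f -> Lk k (fun x => s m x * f x).
Proof.
move=> nmk [h1 h2]; have nkm : k != m by rewrite eq_sym.
split.
  have h := lc_bracket (L_ZZ nmk) h2.
  rewrite /ZZ ibracketZr W_brs ?scalerA ?ii // in h.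
  move/L_opp: h; rewrite scaleN1r opprK => h.
  apply: (@L_unscale 2); first by rewrite pnatr_eq0.
  rewrite -two_real W_scale; move: h; congr L; apply: W_ext => // x.
  rewrite !s_fl eqxx ?(negbTE nmk) ?(negbTE nkm) /s; case: (qbit k x); case: (qbit m x); ring.
have h := lc_bracket (L_ZZ nmk) h1.
rewrite /ZZ W_brs // in h.
apply: (@L_unscale 2); first by rewrite pnatr_eq0.
rewrite -two_real scalerA mulrC -scalerA W_scale; move: h; congr L; congr (_ *: _).
apply: W_ext => // x.
rewrite !s_fl eqxx ?(negbTE nmk) ?(negbTE nkm) /s; case: (qbit k x); case: (qbit m x); ring.
Qed.

Lemma Lk1 k : Lk k (fun _ => 1).
Proof.
split; first exact: L_X.
by move: (L_Yp k); rewrite /Yp; congr L; congr (_ *: _); apply: W_ext => // x; rewrite mulr1.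
Qed.

Lemma Lk_ext k f g : (forall x, f x = g x) -> Lk k f -> Lk k g.
Proof.
move=> e [h1 h2]; split.
  by move: h1; congr L; apply: W_ext.
by move: h2; congr L; congr (_ *: _); apply: W_ext => // x; rewrite e.
Qed.

Definition e (a : I) (l : 'I_N) (x : I) : C := if qbit l x == qbit l a then 1 else 0.

Definition hprod (k : 'I_N) (a x : I) : C := \prod_(l < N | l != k) e a l x.

Lemma e_dec a l x P : e a l x * P =
  ((2^-1 : R)%:C)%C * P + (((if qbit l a then -1 else 1) * 2^-1 : R)%:C)%C * (s l x * P).
Proof.
rewrite /e /s rmorphM fmorphV rmorph_nat.
have h2 : (2 : C) != 0 by rewrite pnatr_eq0.
case: (qbit l x); case: (qbit l a); by rewrite /= ?rmorphN1 ?rmorph1; field.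
Qed.

Lemma Lk_prod k a : Lk k (hprod k a).
Proof.
suff H : forall n, Lk k (fun x => \prod_(l < N | (l < n)%N && (l != k)) e a l x).
  by apply: Lk_ext (H N) => x; rewrite /hprod; apply: eq_bigl => l; rewrite ltn_ord.
elim=> [|n IH].
  apply: Lk_ext (Lk1 k) => x; rewrite big_pred0 // => l.
case: (ltnP n N) => hn; last first.
  apply: Lk_ext IH => x; apply: eq_bigl => l.
  by rewrite ltnS; case: (ltngtP l n) => // h; move: (ltn_ord l); lia.
set o := Ordinal hn.
case: (eqVneq o k) => [ok|nok].
  apply: Lk_ext IH => x; apply: eq_bigl => l; rewrite ltnS.
  case: (ltngtP l n) => //= h.
  have lk : l = k by rewrite -ok; apply: val_inj.
  by rewrite lk eqxx.
have H2 := Lk_lin (2^-1) ((if qbit o a then -1 else 1) * 2^-1) IH (Lk_mul nok IH).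
apply: Lk_ext H2 => x; rewrite -e_dec.
rewrite [in RHS](bigD1 o) /=; last by rewrite ltnS leqnn nok.
congr (_ * _); apply: eq_bigl => l; rewrite ltnS.
case: (ltngtP l n) => //= h.
  have -> : (l != o) by rewrite -val_eqE /= neq_ltn h.
  by rewrite andbT.
have -> : l = o by apply: val_inj.
by rewrite eqxx andbF.
Qed.

Definition Hm (u v : I) : M := delta_mx u v + delta_mx v u.
Definition Km (u v : I) : M := iC *: (delta_mx u v - delta_mx v u).

Lemma hprod_val k a x : hprod k a x = if (x == a) || (x == fl k a) then 1 else 0.
Proof.
case: ifP => hx.
  apply: big1 => l nlk; rewrite /e.
  case/orP: hx => /eqP ->; first by rewrite eqxx.
  by rewrite flP (_ : (val l == val k) = false) ?addbF ?eqxx //; apply/negbTE; rewrite val_eqE.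
case: (boolP [exists l, (l != k) && (qbit l x != qbit l a)]) => [/existsP [l /andP[nlk hl]] | /existsPn H].
  by rewrite /hprod (bigD1 l) //= /e (negbTE hl) mul0r.
exfalso; move/negbT: hx; rewrite negb_or => /andP[/eqP nxa /eqP nxf].
case: (eqVneq (qbit k x) (qbit k a)) => hk.
  apply: nxa; apply: ord_bits => l; case: (eqVneq l k) => [->//|nlk].
  by move: (H l); rewrite nlk /= negbK => /eqP.
apply: nxf; apply: ord_bits => l; rewrite flP; case: (eqVneq l k) => [->|nlk].
  by rewrite eqxx addbT; move: hk; case: (qbit k x); case: (qbit k a).
rewrite (_ : (val l == val k) = false) ?addbF; last by apply/negbTE; rewrite val_eqE.
by move: (H l); rewrite nlk /= negbK => /eqP.
Qed.

Lemma W_hprod k a : W (fl k) (hprod k a) = Hm a (fl k a).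
Proof.
have naf : (a == fl k a) = false by apply/negbTE; rewrite eq_sym fl_neq.
have nfa : (fl k a == a) = false by apply/negbTE; rewrite fl_neq.
apply/matrixP => x y; rewrite WE hprod_val !mxE.
case: (eqVneq x a) => [->|nxa].
  by rewrite naf /=; case: (y == fl k a); rewrite ?addr0.
case: (eqVneq x (fl k a)) => [->|nxf].
  by rewrite flK /=; case: (y == a); rewrite ?add0r ?addr0.
by case: ifP; rewrite /= ?addr0.
Qed.

Lemma W_kprod (k : 'I_N) (a : I) : ((if qbit k a then -1 else 1 : R)%:C)%C *:
  (iC *: W (fl k) (fun x => s k x * hprod k a x)) = Km a (fl k a).
Proof.
have naf : (a == fl k a) = false by apply/negbTE; rewrite eq_sym fl_neq.
rewrite !W_scale; apply/matrixP => x y; rewrite WE hprod_val !mxE.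
case: (eqVneq x a) => [->|nxa].
  rewrite naf /=; case: (y == fl k a) => /=; rewrite /s;
  by case: (qbit k a); rewrite ?rmorphN1 ?rmorph1; ring.
case: (eqVneq x (fl k a)) => [->|nxf].
  rewrite flK /=; case: (y == a) => /=; rewrite ?s_fl ?eqxx /s;
  by case: (qbit k a); rewrite ?rmorphN1 ?rmorph1; ring.
by case: ifP => _ /=; ring.
Qed.

Definition good (u v : I) := L (Hm u v) /\ L (Km u v).

Lemma good_edge k a : good a (fl k a).
Proof.
have [h1 h2] := Lk_prod k a; split; first by rewrite -W_hprod.
by rewrite -W_kprod; apply: L_scale.
Qed.

Definition Dm (u v : I) : M := delta_mx u u - delta_mx v v.

Lemma dmul (a b c d : I) : (delta_mx a b : M) *m (delta_mx c d : M) = (delta_mx a d : M) *+ (b == c).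
Proof. exact: mul_delta_mx_cond. Qed.

Ltac expand_br :=
  rewrite /Defs.ibracket /Hm /Km /Dm;
  rewrite -?scalemxAl -?scalemxAr;
  rewrite ?(mulmxDl, mulmxDr, mulmxBl, mulmxBr, mulmxN, mulNmx);
  rewrite !dmul.

Lemma HH x m y : x != m -> m != y -> x != y -> ibracket (Hm x m) (Hm m y) = Km x y.
Proof.
move=> /negbTE h1 /negbTE h2 /negbTE h3.
have h1' : (m == x) = false by rewrite eq_sym.
have h2' : (y == m) = false by rewrite eq_sym.
have h3' : (y == x) = false by rewrite eq_sym.
expand_br; rewrite ?eqxx ?h1 ?h2 ?h3 ?h1' ?h2' ?h3' ?mulr1n ?mulr0n.
by apply/matrixP => u v; rewrite !mxE; ring.
Qed.

Lemma HK x m y : x != m -> m != y -> x != y -> ibracket (Hm x m) (Km m y) = - Hm x y.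
Proof.
move=> /negbTE h1 /negbTE h2 /negbTE h3.
have h1' : (m == x) = false by rewrite eq_sym.
have h2' : (y == m) = false by rewrite eq_sym.
have h3' : (y == x) = false by rewrite eq_sym.
expand_br; rewrite ?eqxx ?h1 ?h2 ?h3 ?h1' ?h2' ?h3' ?mulr1n ?mulr0n.
rewrite -?scalerBr ?scalerA ?ii ?scaleN1r.
by apply/matrixP => u v; rewrite !mxE; ring.
Qed.

Lemma HKD x y : x != y -> ibracket (Hm x y) (Km x y) = 2 *: Dm x y.
Proof.
move=> /negbTE h3.
have h3' : (y == x) = false by rewrite eq_sym.
expand_br; rewrite ?eqxx ?h3 ?h3' ?mulr1n ?mulr0n.
rewrite -?scalerBr ?scalerA ?ii ?scaleN1r.
by apply/matrixP => u v; rewrite !mxE; ring.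
Qed.

Lemma good_sym u v : good u v -> good v u.
Proof.
case=> h1 h2; split; first by rewrite /Hm addrC.
have -> : Km v u = - Km u v by rewrite /Km -scalerN opprB.
exact: L_opp.
Qed.

Lemma good_trans x m y : x != m -> m != y -> x != y -> good x m -> good m y -> good x y.
Proof.
move=> h1 h2 h3 [a1 a2] [b1 b2]; split.
  have := L_opp (lc_bracket a1 b2); by rewrite HK // opprK.
by have := lc_bracket a1 b1; rewrite HH.
Qed.

Definition dset (x y : I) := [pred l : 'I_N | qbit l x != qbit l y].

Lemma dset_fl l x y : l \in dset x y -> #|dset x y| = #|dset (fl l x) y|.+1.
Proof.
move=> hl; rewrite (cardD1 l) hl add1n; congr _.+1; apply: eq_card => l' /=.
rewrite !inE /dset /= flP.
case: (eqVneq l' l) => [->|ne].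
  rewrite eqxx addbT /=; move: hl; rewrite inE /=.
  by case: (qbit l x); case: (qbit l y).
by rewrite (_ : (val l' == val l) = false) ?addbF //; apply/negbTE; rewrite val_eqE.
Qed.

Lemma dset0 x y : #|dset x y| = 0 -> x = y.
Proof.
move/card0_eq => H; apply: ord_bits => l.
by have := H l; rewrite inE /= => /negbFE/eqP.
Qed.

Lemma good_all_n n : forall x y, #|dset x y| = n.+1 -> good x y.
Proof.
elim: n => [|n IH] x y hc.
  have [l hl] : exists l, l \in dset x y.
    by apply/card_gt0P; rewrite hc.
  move: hc; rewrite (dset_fl hl) => /eq_add_S/dset0 <-.
  exact: good_edge.
have [l hl] : exists l, l \in dset x y by apply/card_gt0P; rewrite hc.
move: hc; rewrite (dset_fl hl) => /eq_add_S hc.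
have hxy : x != y by apply/eqP => e; move: hl; rewrite e inE /= eqxx.
have hmy : fl l x != y.
  apply/eqP => e; move: hc; rewrite e (@eq_card0 _ (dset y y)) // => l'.
  by rewrite /dset inE /= eqxx.
apply: (@good_trans x (fl l x) y) => //.
- by rewrite eq_sym fl_neq.
- exact: good_edge.
exact: IH.
Qed.

Lemma good_all x y : x != y -> good x y.
Proof.
move=> hxy; case hc: #|dset x y| => [|n]; last exact: good_all_n hc.
by move: hxy; rewrite (dset0 hc) eqxx.
Qed.

Lemma L_Dm x y : L (Dm x y).
Proof.
case: (eqVneq x y) => [->|nxy]; first by rewrite /Dm subrr; exact: lc_zero.
have [h1 h2] := good_all nxy.
apply: (@L_unscale 2); first by rewrite pnatr_eq0.
by rewrite -two_real -HKD //; apply: lc_bracket.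
Qed.

Local Notation cRe := (@complex.Re R).
Local Notation cIm := (@complex.Im R).

Lemma conjE (z : C) : (z^*)%C = ((cRe z)%:C)%C - iC * ((cIm z)%:C)%C.
Proof. by case: z => a b; simpc. Qed.

Lemma pair_term (A : M) u v : A v u = ((A u v)^*)%C -> u != v ->
  L (A u v *: delta_mx u v + A v u *: delta_mx v u).
Proof.
move=> H nuv; have [h1 h2] := good_all nuv.
have := lc_add (L_scale (cRe (A u v)) h1) (L_scale (cIm (A u v)) h2).
congr L; rewrite H; move: (A u v) => z; rewrite conjE.
set a := complex.Re z; set b := complex.Im z.
rewrite [z in RHS]complexE -/a -/b /Hm /Km.
by apply/matrixP => p q; rewrite !mxE; ring.
Qed.

Lemma offdiag_L (A : M) : is_hermitian A ->
  L (\sum_u \sum_(v | v != u) A u v *: delta_mx u v).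
Proof.
move=> hA.
set O := \sum_u \sum_(v | v != u) A u v *: delta_mx u v.
have e : \sum_u \sum_(v | v != u) A v u *: delta_mx v u = O.
  rewrite /O; under eq_bigr => u _ do rewrite big_mkcond.
  under [RHS]eq_bigr => u _ do rewrite big_mkcond.
  rewrite exchange_big /=; apply: eq_bigr => u _; apply: eq_bigr => v _.
  by rewrite eq_sym.
have h : L (\sum_u \sum_(v | v != u) (A u v *: delta_mx u v + A v u *: delta_mx v u)).
  apply: L_sum => u _; apply: L_sum => v nvu; apply: pair_term; first exact: hA.
  by rewrite eq_sym.
apply: (@L_unscale 2); first by rewrite pnatr_eq0.
rewrite -two_real scaler_nat mulr2n.
move: h; congr L.
under eq_bigr => u _ do rewrite big_split.
by rewrite big_split /= e.
Qed.

Lemma real_diag (z : C) : z = (z^*)%C -> z = ((cRe z)%:C)%C.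
Proof.
case: z => a b /= [] hb.
have : b = 0.
  have : b + b = 0 by rewrite {1}hb addNr.
  by move/eqP; rewrite -mulr2n -mulr_natr mulf_eq0 pnatr_eq0 orbF => /eqP.
by move=> ->.
Qed.

Definition z0 : I := Ordinal (n := 2 ^ N) (m := 0) (expn_gt0 2 N).

Lemma diag_L (A : M) : is_hermitian A -> traceless A ->
  L (\sum_u A u u *: delta_mx u u).
Proof.
move=> hA htr.
have -> : \sum_u A u u *: delta_mx u u = \sum_u ((cRe (A u u))%:C)%C *: Dm u z0.
  rewrite /Dm; under [RHS]eq_bigr => u _ do rewrite -(real_diag (hA u u)) scalerBr.
  rewrite sumrB -scaler_suml.
  by move: htr; rewrite /traceless /mxtrace => ->; rewrite scale0r subr0.
by apply: L_sum => u _; apply: L_scale; apply: L_Dm.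
Qed.

Lemma herm_L (A : M) : is_hermitian A -> traceless A -> L A.
Proof.
move=> hA htr; rewrite [A]matrix_sum_delta.
under eq_bigr => u _ do rewrite (bigD1 u) //=.
rewrite big_split /=.
apply: lc_add; [exact: diag_L | exact: offdiag_L].
Qed.
Local Notation traceless := (@traceless R N).
Local Notation is_hermitian := (@is_hermitian R N).
Local Notation gen_set := (@gen_set R N).

Lemma conj_i : ((iC)^*)%C = - iC :> C.
Proof. by simpc. Qed.

Lemma conj_ibr (U V : C) : iC * ((V^*)%C - (U^*)%C) = ((iC * (U - V))^*)%C.
Proof.
case: U => a b; case: V => c d; simpc.
by apply/eqP; rewrite eq_complex /=; apply/andP; split; apply/eqP; ring.
Qed.

Lemma conj_scale (r : R) (x : C) : (((r%:C)%C * x)^*)%C = (r%:C)%C * (x^*)%C.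
Proof.
case: x => a b; simpc.
by apply/eqP; rewrite eq_complex /=; apply/andP; split; apply/eqP; ring.
Qed.

Lemma conj_sum (F : I -> C) : ((\sum_k F k)^*)%C = \sum_k ((F k)^*)%C.
Proof. exact: raddf_sum. Qed.

Lemma herm_br (A B : M) : is_hermitian A -> is_hermitian B -> is_hermitian (ibracket A B).
Proof.
move=> hA hB i j; rewrite /Defs.ibracket !mxE.
have e1 : \sum_k A j k * B k i = ((\sum_k B i k * A k j)^*)%C.
  by rewrite conj_sum; apply: eq_bigr => k _; rewrite hA hB rmorphM mulrC.
have e2 : \sum_k B j k * A k i = ((\sum_k A i k * B k j)^*)%C.
  by rewrite conj_sum; apply: eq_bigr => k _; rewrite hA hB rmorphM mulrC.
by rewrite e1 e2 conj_ibr.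
Qed.

Lemma herm_add (A B : M) : is_hermitian A -> is_hermitian B -> is_hermitian (A + B).
Proof. by move=> hA hB i j; rewrite !mxE rmorphD hA hB. Qed.

Lemma herm_scale (r : R) (A : M) : is_hermitian A -> is_hermitian (((r%:C)%C) *: A).
Proof. by move=> hA i j; rewrite !mxE conj_scale hA. Qed.

Lemma herm0 : is_hermitian (0 : M).
Proof. by move=> i j; rewrite !mxE rmorph0. Qed.

Lemma herm_sum (I0 : finType) (P : pred I0) (F : I0 -> M) :
  (forall i, P i -> is_hermitian (F i)) -> is_hermitian (\sum_(i | P i) F i).
Proof.
move=> H; apply: (big_ind is_hermitian) => //; [exact: herm0 | exact: herm_add].
Qed.

Lemma herm_W p f : (forall x, p (p x) = x) -> (forall x, f (p x) = ((f x)^*)%C) -> is_hermitian (W p f).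
Proof.
move=> hp hf i j; rewrite !WE.
case: (eqVneq j (p i)) => [->|ne]; first by rewrite hp eqxx hf.
case: (eqVneq i (p j)) => [e|_]; last by rewrite rmorph0.
by move: ne; rewrite e hp eqxx.
Qed.

Lemma s_conj k x : ((s k x)^*)%C = s k x.
Proof. by rewrite /s; case: (qbit k x); rewrite ?rmorphN1 ?rmorph1. Qed.

Lemma traceW p f : (forall x, p x != x) -> \tr (W p f) = 0.
Proof.
move=> hp; rewrite /mxtrace; apply: big1 => x _.
by rewrite WE eq_sym (negbTE (hp x)).
Qed.

Lemma fl_inj k : injective (fl k).
Proof. exact: (can_inj (flK k)). Qed.

Lemma trace_Z k : \tr (W id (s k)) = 0.
Proof.
have e : \sum_x s k x = \sum_x s k (fl k x) by apply: reindex_inj; exact: fl_inj.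
have e2 : \sum_x s k (fl k x) = - \sum_x s k x.
  rewrite -sumrN; apply: eq_bigr => x _; by rewrite s_fl eqxx mulN1r.
rewrite /mxtrace (eq_bigr (s k)) => [|x _]; last by rewrite WE eqxx.
have h : \sum_x s k x + \sum_x s k x = 0 by rewrite {2}e e2 subrr.
move/eqP: h; rewrite -mulr2n -mulr_natr mulf_eq0 pnatr_eq0 orbF => /eqP.
by [].
Qed.

Lemma fl2_neq (i j : 'I_N) x : i != j -> fl j (fl i x) != x.
Proof.
move=> nij; apply/eqP => e; have := flP j (fl i x) i; rewrite e flP eqxx.
rewrite (_ : (val i == val j) = false); last by apply/negbTE; rewrite val_eqE.
by case: (qbit i x).
Qed.

Lemma conj_s2 k m x y : (((s k x * s m y)^*)%C) = s k x * s m y.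
Proof.
by rewrite /s; case: (qbit k x); case: (qbit m y); rewrite ?mulrNN ?mulr1 ?mulN1r ?mul1r ?rmorphN1 ?rmorph1.
Qed.

Lemma gen_ok A : gen_set A -> is_hermitian A /\ traceless A.
Proof.
case=> [[k ->]|[->|->]].
- rewrite sz_W; split; last exact: trace_Z.
  by apply: herm_W => // x; rewrite s_conj.
- split.
    apply: herm_sum => k _; rewrite sx_W; apply: herm_W => x; first exact: flK.
    by rewrite rmorph1.
  rewrite /traceless raddf_sum; apply: big1 => k _; rewrite sx_W.
  by apply: traceW => x; apply: fl_neq.
- have nij : forall i j : 'I_N, (i < j)%N -> i != j.
    by move=> i j h; rewrite -val_eqE (ltn_eqF h).
  split.
    apply: herm_sum => i _; apply: herm_sum => j hij; rewrite syy.
    have -> : (-1 : C) = (((-1 : R)%:C)%C) by rewrite rmorphN1.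
    apply: herm_scale; apply: herm_W => x; first by rewrite flC !flK.
    have hn := nij _ _ hij; have hn' : (j == i) = false by rewrite eq_sym; apply/negbTE.
    rewrite !s_fl !eqxx (negbTE hn) hn' !mul1r conj_s2; ring.
  rewrite /traceless raddf_sum; apply: big1 => i _; rewrite raddf_sum; apply: big1 => j hij.
  rewrite syy W_scale; apply: traceW => x; exact: fl2_neq (nij _ _ hij).
Qed.

Lemma L_ok A : L A -> is_hermitian A /\ traceless A.
Proof.
elim=> {A} [A hg| |A B _ [hA tA] _ [hB tB]| r A _ [hA tA]| A B _ [hA tA] _ [hB tB]].
- exact: gen_ok.
- by split; [exact: herm0 | exact: mxtrace0].
- split; first exact: herm_add.
  by rewrite /traceless mxtraceD tA tB addr0.
- split; first exact: herm_scale.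
  by rewrite /traceless mxtraceZ tA mulr0.
split; first exact: herm_br.
by rewrite /traceless /Defs.ibracket mxtraceZ raddfB /= mxtrace_mulC subrr mulr0.
Qed.
End Main.

Unset Implicit Arguments.

Theorem proposition1 (R : rcfType) (N : nat) (hN : (1 <= N)%N)
    (A : 'M[complex R]_(2 ^ N)) :
  lie_closure (@gen_set R N) A <-> is_hermitian A /\ traceless A.
Proof.
split; first exact: L_ok.
by case=> h1 h2; apply: herm_L.
Qed.
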